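(* Let $m\ge 2$ and $\alpha\in[0,1]$. Every deterministic voting rule $f$ that takes ranked preferences with intensities as input satisfies, under mandatory elicitation of the intensities, $\mathsf{dist}_\alpha(f)\ge 1+2\alpha$.
   Context: An election $\mathcal E=(N,A,\vec\sigma)$ has a finite set $N$ of $n$ agents, a set $A$ of $m$ alternatives, and a profile $\vec\sigma=(\sigma_1,\dots,\sigma_n)$. Each $\sigma_i=(\pi_i,\Join_i)$ consists of a bijection $\pi_i:[m]\to A$, where $\pi_i(1)$ is agent $i$'s most preferred alternative, and a map $\Join_i:[m-1]\to\{\succ,\succ\!\!\succ\}$ recording strong ($\succ\!\!\succ$) or ordinary ($\succ$) preference between consecutive alternatives. A metric $d$ on $N\cup A$ is nonnegative and symmetric, satisfies the triangle inequality, and has $d(x,x)=0$. For $\alpha\in[0,1]$, the profile $\vec\sigma$ is $\alpha$-consistent with $d$ under mandatory elicitation if for every agent $i$ and every $j\in[m-1]$: - if $\Join_i(j)=\,\succ$, then $d(i,\pi_i(j+1))\ge d(i,\pi_i(j))>\alpha\, d(i,\pi_i(j+1))$; - if $\Join_i(j)=\,\succ\!\!\succ$, then $d(i,\pi_i(j))\le \alpha\, d(i,\pi_i(j+1))$. Let $\mathrm{sc}_d(a)=\sum_{i\in N}d(i,a)$. Define $\mathsf{dist}_\alpha(a,\mathcal E)=\sup_d \mathrm{sc}_d(a)/\min_{b\in A}\mathrm{sc}_d(b)$ over such $\alpha$-consistent metrics $d$. For a deterministic voting rule $f$, $\mathsf{dist}_\alpha(f)=\sup_{\mathcal E}\mathsf{dist}_\alpha(f(\vec\sigma),\mathcal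 E)$ over all elections with $m$ alternatives. *)

(* Defs.v *)
From mathcomp Require Import all_boot all_order all_algebra all_fingroup.
From mathcomp Require Import all_classical all_reals.
From mathcomp Require Import ereal.
Set Implicit Arguments. Unset Strict Implicit. Unset Printing Implicit Defensive.
Import Order.TTheory GRing.Theory Num.Theory.
Local Open Scope ring_scope.
Local Open Scope classical_set_scope.

(* sigma_i = (pi_i, Join_i): pi_i maps rank j (0-indexed) to an alternative;
   strong j = true means  pi_i(j) >>- pi_i(j+1) (strong preference),
   strong j = false means pi_i(j) >- pi_i(j+1). *)
Record pref (m : nat) := Pref {
  ranking : {perm 'I_m};
  strong  : {ffun 'I_m.-1 -> bool} }.

Definition profile (n m : nat) := 'I_n -> pref m.

Definition voting_rule (m : nat) := forall n : nat, profile n m -> 'I_m.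

Definition point (n m : nat) := ('I_n + 'I_m)%type.

Definition is_metric (R : realType) (T : Type) (d : T -> T -> R) : Prop :=
  [/\ (forall x y, 0 <= d x y),
      (forall x y, d x y = d y x),
      (forall x y z, d x z <= d x y + d y z) &
      (forall x, d x x = 0)].

Definition consistent (R : realType) (n m : nat) (alpha : R)
    (sigma : profile n m) (d : point n m -> point n m -> R) : Prop :=
  forall (i : 'I_n) (j : 'I_m.-1) (a b : 'I_m),
    val a = val j -> val b = (val j).+1 ->
    let x := ranking (sigma i) a in
    let y := ranking (sigma i) b in
    if strong (sigma i) j
    then d (inl i) (inr x) <= alpha * d (inl i) (inr y)
    else (d (inl i) (inr x) <= d (inl i) (inr y)) &&
         (alpha * d (inl i) (inr y) < d (inl i) (inr x)).

Definition social_cost (R : realType) (n m : nat)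
    (d : point n m -> point n m -> R) (a : 'I_m) : R :=
  \sum_(i < n) d (inl i) (inr a).

(* sc_d(a) / min_b sc_d(b), with the conventions x/0 = +oo for x > 0 and
   0/0 = 1 (a is then optimal) *)
Definition cost_ratio (R : realType) (n m : nat)
    (d : point n m -> point n m -> R) (a : 'I_m) : \bar R :=
  let M := \big[Num.min/social_cost d a]_(b < m) social_cost d b in
  if M == 0 then (if social_cost d a == 0 then 1%E else +oo%E)
  else (social_cost d a / M)%:E.

Definition dist_elec (R : realType) (n m : nat) (alpha : R)
    (sigma : profile n m) (a : 'I_m) : \bar R :=
  ereal_sup [set cost_ratio d a |
              d in [set d : point n m -> point n m -> R |
                      is_metric d /\ consistent alpha sigma d]].

Definition dist_rule (R : realType) (m : nat) (alpha : R)
    (f : voting_rule m) : \bar R :=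
  ereal_sup [set x | exists (n : nat) (sigma : profile n m),
                       x = dist_elec alpha sigma (f n sigma)].

(* Main.v *)
Require Import Defs.
From mathcomp Require Import all_boot all_order all_algebra all_fingroup.
From mathcomp Require Import all_classical all_reals.
From mathcomp Require Import ereal.
From mathcomp Require Import lra.
Import Order.TTheory GRing.Theory Num.Theory.
Local Open Scope ring_scope.
Set Implicit Arguments. Unset Strict Implicit.

Inductive Pt := X1 | PA | PB | PC.

Definition dt (R : realType) (al : R) (p q : Pt) : R :=
  match p, q with
  | X1, X1 | PA, PA | PB, PB | PC, PC => 0
  | X1, PA | PA, X1 => al
  | X1, PB | PB, X1 | X1, PC | PC, X1 => 1
  | _, _ => 1 + al
  end.

Lemma dt_metric (R : realType) (al : R) : 0 <= al <= 1 ->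
  is_metric (dt al).
Proof.
move=> /andP [h0 h1]; split.
- by case; case => /=; lra.
- by case; case.
- by case; case; case => /=; lra.
- by case.
Qed.

Definition posN (s : bool) (i : nat) : Pt := if (i == 0)%N == s then X1 else PB.
Definition posA (s : bool) (k : nat) : Pt :=
  if (k == 0)%N then (if s then PA else PB)
  else if (k == 1)%N then (if s then PB else PA) else PC.

Definition pos (n m : nat) (s : bool) (p : Defs.point n m) : Pt :=
  match p with inl i => posN s (val i) | inr x => posA s (val x) end.

Definition rk (i k : nat) : nat :=
  if (i == 0)%N then k else if (k == 0)%N then 1%N else if (k == 1)%N then 0%N else k.

Theorem lemma2 (R : realType) (m : nat) (alpha : R) :
  (2 <= m)%N -> 0 <= alpha <= 1 ->
  forall f : voting_rule m,
    ((1 + 2 * alpha)%:E <= dist_rule alpha f)%E.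
Proof.
case: m => [|[|m]] // _ Hal f.
have [h0 h1] := andP Hal.
pose a0 : 'I_m.+2 := ord0.
pose a1 : 'I_m.+2 := Ordinal (isT : (1 < m.+2)%N).
pose flags : {ffun 'I_m.+1 -> bool} := [ffun j => (val j == 0)%N || (alpha == 1)].
pose sigma : profile 2 m.+2 := fun i =>
  Pref (if (val i == 0)%N then 1%g else tperm a0 a1) flags.
have rkE : forall (i : 'I_2) x, val (ranking (sigma i) x) = rk (val i) (val x).
  move=> i x; rewrite /sigma /rk /=; case: ifP => _; first by rewrite perm1.
  by case: tpermP => [->|->|] //= /eqP; rewrite -val_eqE /= => /negbTE -> /eqP;
    rewrite -val_eqE /= => /negbTE ->.
set w := f 2%N sigma.
pose s := (val w != 1)%N.
pose d := fun p q : Defs.point 2 m.+2 => dt alpha (pos s p) (pos s q).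
have dmet : is_metric d.
  have [A B C D] := dt_metric Hal.
  by split => *; rewrite /d.
have dcons : consistent alpha sigma d.
{   move=> i j a b Ha Hb /=.
  rewrite /d /= !rkE Ha Hb ffunE.
  case: i => [[|[|i]]] //= _; case: (val j) => [|[|k]] /=;
  rewrite /s; case: (val w != 1)%N => /=;
  case: (alpha =P 1) => [->|Hne] /=; try lra;
  have Hlt : alpha < 1 by rewrite lt_neqAle h1 andbT; apply/eqP.
  all: try (apply/andP; split; nra).
  all: nra. }
have scE : forall x : 'I_m.+2, social_cost d x =
    dt alpha (posN s 0%N) (posA s (val x)) + dt alpha (posN s 1%N) (posA s (val x)).
  by move=> x; rewrite /social_cost big_ord_recr /= big_ord_recr /= big_ord0 add0r.
have sc_ge0 : forall x, 0 <= social_cost d x.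
  by move=> x; rewrite scE; have [A _ _ _] := dt_metric Hal; apply: addr_ge0; apply: A.
pose B : 'I_m.+2 := if s then a1 else a0.
have scB : social_cost d B = 1.
  by rewrite scE /B /s; case: (val w != 1)%N => /=; lra.
have scw : 1 + 2 * alpha <= social_cost d w.
  rewrite scE /s; case: (val w) => [|[|k]] /=; lra.
have H3 : ((1 + 2 * alpha)%:E <= cost_ratio d w)%E.
  rewrite /cost_ratio.
  set M := \big[_/_]_(b < m.+2) _.
  have M1 : M <= 1 by rewrite -scB; apply: bigmin_le.
  have M0 : 0 <= M by apply: le_bigmin => // *; apply: sc_ge0.
  case: eqP => [_|Mne].
    by rewrite ifF ?leey //; apply/negbTE; rewrite gt_eqF //; lra.
  have Mp : 0 < M by rewrite lt_neqAle M0 andbT eq_sym; apply/eqP.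
  rewrite lee_fin ler_pdivlMr //; nra.
have H2 : (cost_ratio d w <= dist_elec alpha sigma w)%E.
  by apply: ereal_sup_ubound; exists d.
have H1 : (dist_elec alpha sigma w <= dist_rule alpha f)%E.
  by apply: ereal_sup_ubound; exists 2%N, sigma.
exact: le_trans H3 (le_trans H2 H1).
Qed.
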